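(* Let $f:\mathbb{R}^d\to\mathbb{R}$ be $L$-smooth (i.e. $\nabla f$ is $L$-Lipschitz in $\ell_2$). Let $\varepsilon>0$, $c_\infty>0$, $\lambda>0$, $\mu\in[0,1)$, and set $\lambda_k:=\lambda(1-\mu)^k$. Let $(\mathbf{n}_k)_{k\ge0}$ be vectors with nonnegative entries such that for all $k$ and all coordinates $i$: $\sqrt{(\mathbf{n}_k)_i}+\varepsilon\le c_\infty$ and $\dfrac{\sqrt{(\mathbf{n}_k)_i}+\varepsilon}{\sqrt{(\mathbf{n}_{k+1})_i}+\varepsilon}\ge 1-\mu$. Define $F_k(\boldsymbol{\theta}):=f(\boldsymbol{\theta})+\frac{\lambda_k}{2}\|\boldsymbol{\theta}\|^2_{\sqrt{\mathbf{n}_k}}$. Given $\boldsymbol{\theta}_k,\mathbf{u}_k\in\mathbb{R}^d$, let $$\boldsymbol{\theta}_{k+1}=\arg\min_{\boldsymbol{\theta}}\Big(\tfrac{\lambda_k}{2}\|\boldsymbol{\theta}\|^2_{\sqrt{\mathbf{n}_k}}+f(\boldsymbol{\theta}_k)+\langle\mathbf{u}_k,\boldsymbol{\theta}-\boldsymbol{\theta}_k\rangle+\tfrac{1}{2\eta}\|\boldsymbol{\theta}-\boldsymbol{\theta}_k\|^2_{\sqrt{\mathbf{n}_k}}\Big)$$ with $0<\eta\le\min\{\frac{\varepsilon}{3L},\frac{1}{10\lambda}\}$. Then, with $\mathbf{g}_k:=\nabla f(\boldsymbol{\theta}_k)$ and $\tilde{\boldsymbol{\theta}}_k:=(\sqrt{\mathbf{n}_k}+\varepsilon)\circ\boldsymbol{\theta}_k$,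 $$F_{k+1}(\boldsymbol{\theta}_{k+1})\le F_k(\boldsymbol{\theta}_k)-\frac{\eta}{4c_\infty}\|\mathbf{u}_k+\lambda_k\tilde{\boldsymbol{\theta}}_k\|^2+\frac{\eta}{2\varepsilon}\|\mathbf{g}_k-\mathbf{u}_k\|^2.$$
   Context: For a vector $\mathbf{n}\ge0$ (entrywise) and $\varepsilon>0$, $\|\mathbf{x}\|^2_{\sqrt{\mathbf{n}}}:=\langle\mathbf{x},(\sqrt{\mathbf{n}}+\varepsilon)\circ\mathbf{x}\rangle$, where the square root is taken coordinatewise and $\circ$ is the coordinatewise product. $\|\cdot\|$ is the Euclidean norm. *)

(* Defs.v *)
From HB Require Import structures.
From mathcomp Require Import all_boot all_order all_algebra.
From mathcomp Require Import all_classical all_reals all_analysis.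
Set Implicit Arguments. Unset Strict Implicit. Unset Printing Implicit Defensive.
Import Order.TTheory GRing.Theory Num.Theory.
Import numFieldNormedType.Exports.
Local Open Scope ring_scope.

Section Defs.
Variable R : realType.
Variable d : nat.

Definition dotv (x y : 'rV[R]_d) : R := \sum_(i < d) x ord0 i * y ord0 i.

Definition enorm2 (x : 'rV[R]_d) : R := dotv x x.
Definition enorm (x : 'rV[R]_d) : R := Num.sqrt (enorm2 x).

Definition precond (eps : R) (n : 'rV[R]_d) : 'rV[R]_d :=
  \row_(i < d) (Num.sqrt (n ord0 i) + eps).

Definition hadamard (x y : 'rV[R]_d) : 'rV[R]_d := \row_(i < d) (x ord0 i * y ord0 i).

(* ||x||^2_{sqrt n} := < x, (sqrt n + eps) o x > *)
Definition wnorm2 (eps : R) (n x : 'rV[R]_d) : R :=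
  dotv x (hadamard (precond eps n) x).

Definition is_gradient (f : 'rV[R]_d -> R) (grad : 'rV[R]_d -> 'rV[R]_d) : Prop :=
  forall x, differentiable f x /\ forall h, 'd f x h = dotv (grad x) h.

Definition L_smooth (L : R) (f : 'rV[R]_d -> R) (grad : 'rV[R]_d -> 'rV[R]_d) : Prop :=
  is_gradient f grad /\ forall x y, enorm (grad x - grad y) <= L * enorm (x - y).

End Defs.

(* Main.v *)
Require Import Defs.
From HB Require Import structures.
From mathcomp Require Import all_boot all_order all_algebra.
From mathcomp Require Import all_classical all_reals all_analysis.
From mathcomp Require Import ring lra.
Import Order.TTheory GRing.Theory Num.Theory.
Import numFieldNormedType.Exports.
Local Open Scope ring_scope.

Lemma pointwise (R : realFieldType) (g u x t p q L e c eta lk lk1 : R) :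
  t = (p * x - eta * u) / (p * (1 + eta * lk)) ->
  0 < eta -> 0 < e -> e <= p -> p <= c -> 0 <= lk -> eta * lk <= 1/10 ->
  0 <= L -> 3 * L * eta <= e -> 0 <= q -> lk1 * q <= lk * p ->
  g * (t - x)
  + L / 2 * ((t - x) ^+ 2)
  + lk1 / 2 * ((t) * (q * (t)))
  - lk / 2 * (x * (p * x))
  + eta / (4 * c) * ((u + lk * (p * x)) ^+ 2)
  - eta / (2 * e) * ((g - u) ^+ 2) <= 0.
Proof.
move=> ht he0 e0 ep pc lk0 elk L0 Le q0 lq.
have p0 : 0 < p by lra.
have c0 : 0 < c by lra.
have s0 : 0 < 1 + eta * lk by nra.
set D := t - x.
have ut : u = (p * x - t * p * (1 + eta * lk)) / eta.
  rewrite ht; field; rewrite ?mulf_neq0 //; lra.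
have wD : u + lk * (p * x) = - (p * (1 + eta * lk) * D / eta).
  rewrite ut /D; field; lra.
rewrite wD.
have h1 : lk1 / 2 * (t * (q * t)) <= lk / 2 * (p * t ^+ 2).
  have : lk1 * q * t ^+ 2 <= lk * p * t ^+ 2 by apply: ler_wpM2r => //; exact: sqr_ge0.
  move=> H; rewrite -[t * (q * t)]/(t * (q * t)).
  have -> : lk1 / 2 * (t * (q * t)) = (lk1 * q * t ^+ 2) / 2 by ring.
  have -> : lk / 2 * (p * t ^+ 2) = (lk * p * t ^+ 2) / 2 by ring.
  lra.
have h2 : (g - u) * D <= eta / (2 * e) * (g - u) ^+ 2 + e / (2 * eta) * D ^+ 2.
  have -> : eta / (2 * e) * (g - u) ^+ 2 + e / (2 * eta) * D ^+ 2
        = (g - u) * D + (eta * (g - u) - e * D) ^+ 2 / (2 * e * eta).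
    field; lra.
  have : 0 <= (eta * (g - u) - e * D) ^+ 2 / (2 * e * eta).
    apply: divr_ge0; [exact: sqr_ge0| nra].
  lra.
have h3 : L * D ^+ 2 <= p / (3 * eta) * D ^+ 2.
  apply: ler_wpM2r; first exact: sqr_ge0.
  rewrite ler_pdivlMr; last lra. lra.
have h4 : e / (2 * eta) * D ^+ 2 <= p / (2 * eta) * D ^+ 2.
  apply: ler_wpM2r; first exact: sqr_ge0.
  apply: ler_wpM2r; [rewrite invr_ge0; lra | lra].
have h5 : eta / (4 * c) * (- (p * (1 + eta * lk) * D / eta)) ^+ 2
          <= p / (3 * eta) * D ^+ 2.
  have -> : eta / (4 * c) * (- (p * (1 + eta * lk) * D / eta)) ^+ 2
     = (p / eta * D ^+ 2) * (p * (1 + eta * lk) ^+ 2 / (4 * c)).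
    field; lra.
  have -> : p / (3 * eta) * D ^+ 2 = (p / eta * D ^+ 2) * (1 / 3).
    field; lra.
  apply: ler_wpM2l.
    apply: mulr_ge0; [apply: divr_ge0; lra| exact: sqr_ge0].
  rewrite ler_pdivrMr; last lra.
  have : (1 + eta * lk) ^+ 2 <= 121/100 by nra.
  nra.
have h6 : 0 <= lk * p * D ^+ 2.
  apply: mulr_ge0; [nra | exact: sqr_ge0].
have E : g * D + L / 2 * D ^+ 2 + lk / 2 * (p * t ^+ 2) - lk / 2 * (x * (p * x))
   = (g - u) * D + L / 2 * D ^+ 2
     - p * (1 + eta * lk) / eta * D ^+ 2 + lk / 2 * p * D ^+ 2.
  rewrite ut /D; field; lra.
have Hp : p * (1 + eta * lk) / eta * D ^+ 2 = p / eta * D ^+ 2 + lk * p * D ^+ 2.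
  field; lra.
have Hq : p / eta * D ^+ 2 = p / (2 * eta) * D ^+ 2 + p / (3 * eta) * D ^+ 2 + p / (6 * eta) * D ^+ 2.
  field; lra.
have h7 : 0 <= p / (6 * eta) * D ^+ 2.
  apply: mulr_ge0; [apply: divr_ge0; lra| exact: sqr_ge0].
lra.
Qed.

Section S.
Variable R : realType.
Variable d : nat.
Implicit Types a b x y : 'rV[R]_d.

Lemma dotvE a b : dotv a b = \sum_(i < d) a ord0 i * b ord0 i.
Proof. by []. Qed.

Lemma dotvBl a b c : dotv (a - b) c = dotv a c - dotv b c.
Proof.
rewrite /dotv -sumrB; apply: eq_bigr => i _; rewrite !mxE; ring.
Qed.

Lemma dotvDl a b c : dotv (a + b) c = dotv a c + dotv b c.
Proof.
rewrite /dotv -big_split; apply: eq_bigr => i _ /=; rewrite !mxE; ring.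
Qed.

Lemma dotvZr (s : R) a b : dotv a (s *: b) = s * dotv a b.
Proof.
rewrite /dotv mulr_sumr; apply: eq_bigr => i _; rewrite !mxE; ring.
Qed.

Lemma dotvZl (s : R) a b : dotv (s *: a) b = s * dotv a b.
Proof.
rewrite /dotv mulr_sumr; apply: eq_bigr => i _; rewrite !mxE; ring.
Qed.

Lemma enorm2_ge0 a : 0 <= enorm2 a.
Proof. by apply: sumr_ge0 => i _; rewrite -expr2 sqr_ge0. Qed.

Lemma enormE a : enorm a ^+ 2 = enorm2 a.
Proof. by rewrite /enorm sqr_sqrtr // enorm2_ge0. Qed.

Lemma enorm_ge0 a : 0 <= enorm a.
Proof. exact: sqrtr_ge0. Qed.

Lemma enormZ (s : R) a : enorm (s *: a) = `|s| * enorm a.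
Proof.
rewrite /enorm /enorm2 dotvZl dotvZr mulrA -expr2 sqrtrM ?sqr_ge0 //.
by rewrite sqrtr_sqr.
Qed.

Lemma enorm2_eq0 a : enorm2 a = 0 -> forall i, a ord0 i = 0.
Proof.
move=> e i.
have H : forall j, predT j -> 0 <= a ord0 j * a ord0 j.
  by move=> j _; rewrite -expr2 sqr_ge0.
have := psumr_eq0P (P := predT) (F := fun j => a ord0 j * a ord0 j) H e.
by move=> /(_ i isT) /eqP; rewrite mulf_eq0 orbb => /eqP.
Qed.

Lemma CS a b : dotv a b <= enorm a * enorm b.
Proof.
set A := enorm a; set B := enorm b.
have H : 2 * (dotv a b * (A * B)) <= 2 * ((A * B) ^+ 2).
  have -> : 2 * ((A * B) ^+ 2) = B ^+ 2 * enorm2 a + A ^+ 2 * enorm2 b.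
    by rewrite -!enormE -/A -/B; ring.
  rewrite /enorm2 /dotv mulr_suml !mulr_sumr -big_split /=.
  apply: ler_sum => i _.
  have : 0 <= (a ord0 i * B - b ord0 i * A) ^+ 2 by exact: sqr_ge0.
  nra.
have AB0 : 0 <= A * B by apply: mulr_ge0; exact: enorm_ge0.
case: (ltrP 0 (A * B)) => hAB.
  have : dotv a b * (A * B) <= (A * B) * (A * B) by rewrite -expr2; lra.
  by rewrite ler_pM2r.
have AB : A * B = 0 by apply/eqP; rewrite eq_le hAB AB0.
have [A0|B0] : A = 0 \/ B = 0.
  by move/eqP: AB; rewrite mulf_eq0 => /orP[/eqP|/eqP]; [left|right].
- have e2 : enorm2 a = 0 by rewrite -enormE -/A A0 expr2 mulr0.
  have -> : dotv a b = 0.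
    by rewrite /dotv big1 // => i _; rewrite (@enorm2_eq0 _ e2 i) mul0r.
  by rewrite AB.
- have e2 : enorm2 b = 0 by rewrite -enormE -/B B0 expr2 mulr0.
  have -> : dotv a b = 0.
    by rewrite /dotv big1 // => i _; rewrite (@enorm2_eq0 _ e2 i) mulr0.
  by rewrite AB.
Qed.

Lemma descent (f : 'rV[R]_d -> R) grad (L : R) x y : 0 <= L -> L_smooth L f grad ->
  f y <= f x + dotv (grad x) (y - x) + L / 2 * enorm2 (y - x).
Proof.
move=> L0 [Hg Hlip].
set D := y - x.
pose phi := fun t : R => f (t *: D + x).
have key t : (fun h : R => h^-1 *: ((phi \o shift t) (h *: 1) - phi t)) =
   (fun h : R => h^-1 *: ((f \o shift (t *: D + x)) (h *: D) - f (t *: D + x))).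
  apply: funext => h /=; rewrite /phi /shift /=.
  by rewrite [h *: 1]mulr1 scalerDl addrA.
have dphi (t : R) : is_derive t 1 phi (dotv (grad (t *: D + x)) D).
  apply: DeriveDef.
    have := @diff_derivable _ _ _ f (t *: D + x) D (proj1 (Hg _)).
    by rewrite /derivable key.
  rewrite /derive key -/(derive f (t *: D + x) D) deriveE; last exact: (proj1 (Hg _)).
  exact: (proj2 (Hg _)).
set K1 := dotv (grad x) D.
set K2 := L / 2 * enorm2 D.
pose psi := phi - K1 \*: (@id R) - K2 \*: ((@id R) * (@id R)).
pose dpsi := fun t : R => dotv (grad (t *: D + x)) D - K1 *: (1 : R) - K2 *: (t *: (1 : R) + t *: (1 : R)).
have Dpsi (t : R) : is_derive t 1 psi (dpsi t).
  rewrite /psi /dpsi.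
  apply: is_deriveB.
have [c c01 Hc] : exists2 c, c \in `[0, 1]%R & psi 1 - psi 0 = dpsi c * (1 - 0).
  apply: MVT_segment => //.
  apply: derivable_within_continuous => z _.
  exact: (@ex_derive _ _ _ _ _ _ _ (Dpsi z)).
have c0 : 0 <= c by move: c01; rewrite in_itv /= => /andP[].
have hd : dpsi c <= 0.
  rewrite /dpsi.
  have := CS (grad (c *: D + x) - grad x) D.
  rewrite dotvBl -/K1 => H1.
  have H2 := Hlip (c *: D + x) x.
  rewrite addrK enormZ ger0_norm // in H2.
  have H3 : enorm (grad (c *: D + x) - grad x) * enorm D <= L * (c * enorm D) * enorm D.
    by apply: ler_wpM2r => //; exact: enorm_ge0.
  have H4 : L * (c * enorm D) * enorm D = L * c * enorm2 D by rewrite -enormE; ring.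
  change (dotv (grad (c *: D + x)) D - K1 * 1 - K2 * (c * 1 + c * 1) <= 0).
  rewrite /K2.
  have -> : L / 2 * enorm2 D * (c * 1 + c * 1) = L * c * enorm2 D by field.
  lra.
have E1 : psi 1 = f y - K1 - K2.
  change (f (1 *: D + x) - K1 * 1 - K2 * (1 * 1) = f y - K1 - K2).
  by rewrite scale1r /D subrK !mulr1.
have E0 : psi 0 = f x.
  change (f (0 *: D + x) - K1 * 0 - K2 * (0 * 0) = f x).
  rewrite scale0r add0r.
  by rewrite !mulr0 !subr0.
rewrite subr0 mulr1 E1 E0 in Hc.
rewrite -/K1 -/K2; lra.
Qed.

Lemma wnorm2E eps (n z : 'rV[R]_d) :
  wnorm2 eps n z = \sum_(i < d) z ord0 i * ((Num.sqrt (n ord0 i) + eps) * z ord0 i).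
Proof. by rewrite /wnorm2 /dotv; apply: eq_bigr => i _; rewrite !mxE. Qed.

Lemma phi_sum (lk eta eps fx : R) (n u xk z : 'rV[R]_d) :
  lk / 2 * wnorm2 eps n z + fx + dotv u (z - xk) + 1 / (2 * eta) * wnorm2 eps n (z - xk)
  = fx + \sum_(i < d) (lk / 2 * (z ord0 i * ((Num.sqrt (n ord0 i) + eps) * z ord0 i))
        + u ord0 i * (z ord0 i - xk ord0 i)
        + 1 / (2 * eta) * ((z ord0 i - xk ord0 i) * ((Num.sqrt (n ord0 i) + eps) * (z ord0 i - xk ord0 i)))).
Proof.
rewrite !wnorm2E !big_split /= -!mulr_sumr.
have -> : dotv u (z - xk) = \sum_(i < d) u ord0 i * (z ord0 i - xk ord0 i).
  by apply: eq_bigr => i _; rewrite !mxE.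
have -> : \sum_(i < d) (z - xk) ord0 i * ((Num.sqrt (n ord0 i) + eps) * (z - xk) ord0 i)
  = \sum_(i < d) (z ord0 i - xk ord0 i) * ((Num.sqrt (n ord0 i) + eps) * (z ord0 i - xk ord0 i)).
  by apply: eq_bigr => i _; rewrite !mxE.
ring.
Qed.

Lemma foc_sum (F G H : 'I_d -> R) :
  \sum_(i < d) F i <= \sum_(i < d) G i ->
  (forall i, F i = G i + H i) -> (forall i, 0 <= H i) -> forall i, H i = 0.
Proof.
move=> hs hFG hH i.
have e : \sum_(i < d) F i = \sum_(i < d) G i + \sum_(i < d) H i.
  by rewrite -big_split; apply: eq_bigr => j _; exact: hFG.
have h0 : \sum_(i < d) H i = 0.
  have h1 : 0 <= \sum_(i < d) H i by apply: sumr_ge0 => j _; exact: hH.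
  move: hs; rewrite e; lra.
have hH' : forall j, predT j -> 0 <= H j by move=> j _; exact: hH.
have := psumr_eq0P (P := predT) (F := H) hH' h0.
by move=> /(_ i isT).
Qed.
End S.

Theorem mainTheorem3 (R : realType) (d : nat)
  (f : 'rV[R]_d -> R) (grad : 'rV[R]_d -> 'rV[R]_d) (L : R)
  (eps cinf lam mu eta : R)
  (n theta u : nat -> 'rV[R]_d) :
  0 <= L -> L_smooth L f grad ->
  0 < eps -> 0 < cinf -> 0 < lam -> 0 <= mu -> mu < 1 ->
  (forall k (i : 'I_d), 0 <= n k ord0 i) ->
  (forall k (i : 'I_d), Num.sqrt (n k ord0 i) + eps <= cinf) ->
  (forall k (i : 'I_d),
     (Num.sqrt (n k ord0 i) + eps) / (Num.sqrt (n k.+1 ord0 i) + eps) >= 1 - mu) ->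
  0 < eta -> 3 * L * eta <= eps -> eta <= 1 / (10 * lam) ->
  let lamk := fun k : nat => lam * (1 - mu) ^+ k in
  let F := fun (k : nat) (th : 'rV[R]_d) => f th + lamk k / 2 * wnorm2 eps (n k) th in
  forall k : nat,
  (forall th : 'rV[R]_d,
     lamk k / 2 * wnorm2 eps (n k) (theta k.+1) + f (theta k)
       + dotv (u k) (theta k.+1 - theta k)
       + 1 / (2 * eta) * wnorm2 eps (n k) (theta k.+1 - theta k)
     <= lamk k / 2 * wnorm2 eps (n k) th + f (theta k)
       + dotv (u k) (th - theta k)
       + 1 / (2 * eta) * wnorm2 eps (n k) (th - theta k)) ->
  F k.+1 (theta k.+1)
    <= F k (theta k)
       - eta / (4 * cinf) * enorm2 (u k + lamk k *: hadamard (precond eps (n k)) (theta k))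
       + eta / (2 * eps) * enorm2 (grad (theta k) - u k).
Proof.
move=> L0 Hsm e0 c0 lam0 mu0 mu1 n0 hc hratio eta0 hLe heta lamk F k Hmin.
have pow0 : 0 <= (1 - mu) ^+ k by apply: exprn_ge0; lra.
have pow1 : (1 - mu) ^+ k <= 1 by apply: exprn_ile1; lra.
have lk0 : 0 <= lamk k by rewrite /lamk; nra.
have lkle : lamk k <= lam by rewrite /lamk; nra.
have elk : eta * lamk k <= 1 / 10.
  have : eta * (10 * lam) <= 1 by rewrite -ler_pdivlMr //; nra.
  nra.
have lk1E : lamk k.+1 = lamk k * (1 - mu) by rewrite /lamk exprSr mulrA.
have pge (i : 'I_d) : eps <= Num.sqrt (n k ord0 i) + eps.
  have := sqrtr_ge0 (n k ord0 i); lra.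
have qge (i : 'I_d) : eps <= Num.sqrt (n k.+1 ord0 i) + eps.
  have := sqrtr_ge0 (n k.+1 ord0 i); lra.
have Hfoc (i : 'I_d) : theta k.+1 ord0 i =
   ((Num.sqrt (n k ord0 i) + eps) * theta k ord0 i - eta * u k ord0 i)
     / ((Num.sqrt (n k ord0 i) + eps) * (1 + eta * lamk k)).
  pose o := \row_(j < d) (((Num.sqrt (n k ord0 j) + eps) * theta k ord0 j - eta * u k ord0 j)
     / ((Num.sqrt (n k ord0 j) + eps) * (1 + eta * lamk k))).
  have Hm := Hmin o.
  rewrite !phi_sum lerD2l in Hm.
  pose Hf := fun j : 'I_d => (lamk k / 2 + 1 / (2 * eta)) * (Num.sqrt (n k ord0 j) + eps)
      * (theta k.+1 ord0 j - (((Num.sqrt (n k ord0 j) + eps) * theta k ord0 j - eta * u k ord0 j)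
     / ((Num.sqrt (n k ord0 j) + eps) * (1 + eta * lamk k)))) ^+ 2.
  have Hz : Hf i = 0.
    apply: (@foc_sum R d _ _ Hf Hm).
      move=> j; rewrite /Hf !mxE.
      have := pge j; move=> pj.
      field.
      by apply/and3P; split; apply: lt0r_neq0; nra.
    move=> j; rewrite /Hf.
    have := pge j; move=> pj.
    apply: mulr_ge0; last exact: sqr_ge0.
    apply: mulr_ge0; last lra.
    have : 0 <= 1 / (2 * eta) by apply: divr_ge0; lra.
    lra.
  have cpos : 0 < (lamk k / 2 + 1 / (2 * eta)) * (Num.sqrt (n k ord0 i) + eps).
    have := pge i; move=> pj.
    apply: mulr_gt0; last lra.
    have : 0 < 1 / (2 * eta) by apply: divr_gt0; lra.
    lra.
  move: Hz => /eqP; rewrite /Hf mulf_eq0 (gt_eqF cpos) /= sqrf_eq0 subr_eq0.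
  by move/eqP.
have Hd := @descent R d f grad L (theta k) (theta k.+1) L0 Hsm.
set g := grad (theta k).
have e1 : dotv g (theta k.+1 - theta k)
   = \sum_(i < d) g ord0 i * (theta k.+1 ord0 i - theta k ord0 i).
  by apply: eq_bigr => i _; rewrite !mxE.
have e2 : enorm2 (theta k.+1 - theta k)
   = \sum_(i < d) (theta k.+1 ord0 i - theta k ord0 i) ^+ 2.
  by apply: eq_bigr => i _; rewrite !mxE expr2.
have e5 : enorm2 (u k + lamk k *: hadamard (precond eps (n k)) (theta k))
   = \sum_(i < d) (u k ord0 i + lamk k * ((Num.sqrt (n k ord0 i) + eps) * theta k ord0 i)) ^+ 2.
  by apply: eq_bigr => i _; rewrite !mxE expr2.
have e6 : enorm2 (g - u k) = \sum_(i < d) (g ord0 i - u k ord0 i) ^+ 2.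
  by apply: eq_bigr => i _; rewrite !mxE expr2.
have Hsum : \sum_(i < d) (
    g ord0 i * (theta k.+1 ord0 i - theta k ord0 i)
  + L / 2 * ((theta k.+1 ord0 i - theta k ord0 i) ^+ 2)
  + lamk k.+1 / 2 * (theta k.+1 ord0 i * ((Num.sqrt (n k.+1 ord0 i) + eps) * theta k.+1 ord0 i))
  - lamk k / 2 * (theta k ord0 i * ((Num.sqrt (n k ord0 i) + eps) * theta k ord0 i))
  + eta / (4 * cinf) * ((u k ord0 i + lamk k * ((Num.sqrt (n k ord0 i) + eps) * theta k ord0 i)) ^+ 2)
  - eta / (2 * eps) * ((g ord0 i - u k ord0 i) ^+ 2)) <= 0.
  apply: sumr_le0 => i _.
  have pj := pge i; have qj := qge i.
  move=> /=; apply: (@pointwise R _ _ _ _ _ _ _ _ _ _ _ _ (Hfoc i)) => //; try lra.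
  all: try exact: hc.
  all: rewrite ?lk1E.
  all: try lra.
    rewrite -mulrA.
    have hr := hratio k i.
    rewrite ler_pdivlMr in hr; last lra.
    have : lamk k * ((1 - mu) * (Num.sqrt (n k.+1 ord0 i) + eps))
       <= lamk k * (Num.sqrt (n k ord0 i) + eps) by apply: ler_wpM2l.
    lra.
rewrite !big_split /= !sumrN -!mulr_sumr in Hsum.
rewrite /F /= !wnorm2E e5 e6.
rewrite e1 e2 in Hd.
lra.
Qed.
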